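(* Consider the symmetric first-price sealed-bid auction with $n=2$ bidders and uniform prior $F=\mathrm{Id}$ on $[0,1]$, and let $0<\delta\le\frac15$. Then the function $\beta^*(x)=\frac{x}{2}$ (the unique symmetric BNE) does not satisfy the symmetric MVI: there exist $\beta,\tilde\beta\in\mathcal{B}_\delta$ with $DU(\beta,\tilde\beta)[\beta-\beta^*]>0$. Moreover, the condition fails locally: for every open neighborhood $N$ of $\beta^*$ in $V$, there exist $\beta,\tilde\beta\in N\cap\mathcal{B}_\delta$ with $DU(\beta,\tilde\beta)[\beta-\beta^*]>0$.
   Context: $V:=W^{1,1}(0,1)$. For $\delta>0$, $\mathcal{B}_\delta:=\{\beta\in V:0\le\beta\le1\text{ a.e.},\ \delta\le\beta'\text{ a.e.},\ \beta(0)=0\}$. Two bidders with values i.i.d. uniform on $[0,1]$. First-price ex-ante utility of bidder 1 bidding by $\beta$ against the other bidding by $\tilde\beta$: $U(\beta,\tilde\beta)=\int_0^1(x-\beta(x))\int_0^1\chi_{\{\beta(x)>\tilde\beta(y)\}}\,\mathrm{d}y\,\mathrm{d}x$. $DU(\beta,\tilde\beta)[d]:=\lim_{\varepsilon\to0}\varepsilon^{-1}(U(\beta+\varepsilon d,\tilde\beta)-U(\beta,\tilde\beta))$ for $d\in V$. $\beta^*$ solves the symmetric MVI if $DU(\beta,\tilde\beta)[\beta-\beta^*]\le0$ for all $\beta,\tilde\beta\in\mathcal{B}_\delta$. *)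

(* Defs.v *)
From HB Require Import structures.
From mathcomp Require Import all_boot all_order all_algebra.
From mathcomp Require Import all_classical all_reals all_analysis.
Set Implicit Arguments. Unset Strict Implicit. Unset Printing Implicit Defensive.
Import Order.TTheory GRing.Theory Num.Theory.
Import numFieldNormedType.Exports.
Local Open Scope classical_set_scope.
Local Open Scope ring_scope.

Section Auction.
Variable R : realType.
Local Notation mu := (@lebesgue_measure R).

Definition betastar : R -> R := fun x => x / 2.

(** [g] is the (weak) derivative of [b] on (0,1): [g] is Lebesgue integrable
    on (0,1) and [b] is its absolutely continuous primitive on [0,1].
    (Elements of W^{1,1}(0,1) are identified with their absolutely continuous
    representative.) *)
Definition weak_deriv01 (b g : R -> R) : Prop :=
  mu.-integrable `]0, 1[ (EFin \o g) /\
  forall x, 0 <= x <= 1 -> b x = b 0 + Rintegral mu `]0, x[ g.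

Definition inV (b : R -> R) : Prop := exists g, weak_deriv01 b g.

Definition Bdelta (delta : R) (b : R -> R) : Prop :=
  exists g, weak_deriv01 b g /\
    {ae mu, forall x, x \in `]0, 1[ -> 0 <= b x <= 1} /\
    {ae mu, forall x, x \in `]0, 1[ -> delta <= g x} /\
    b 0 = 0.

Definition Vball (c : R -> R) (eps : R) (b : R -> R) : Prop :=
  exists gb gc, weak_deriv01 b gb /\ weak_deriv01 c gc /\
    Rintegral mu `]0, 1[ (fun x => `|b x - c x|) +
    Rintegral mu `]0, 1[ (fun x => `|gb x - gc x|) < eps.

Definition U (b tb : R -> R) : R :=
  Rintegral mu `]0, 1[ (fun x =>
    (x - b x) * Rintegral mu `]0, 1[ (fun y => \1_[set y' | tb y' < b x] y)).

Definition DU_is (b tb d : R -> R) (L : R) : Prop :=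
  (fun eps : R => (U (fun x => b x + eps * d x) tb - U b tb) / eps)
    @ (0 : R)^' --> L.

Definition DU_pos (b tb d : R -> R) : Prop :=
  exists L, 0 < L /\ DU_is b tb d L.

End Auction.

(* Main.v *)
Require Import Defs.
From HB Require Import structures.
From mathcomp Require Import all_boot all_order all_algebra.
From mathcomp Require Import all_classical all_reals all_analysis.
From mathcomp Require Import lra measurable_realfun.
Import Order.TTheory GRing.Theory Num.Theory.
Import numFieldNormedType.Exports.
Set Implicit Arguments. Unset Strict Implicit.
Local Open Scope classical_set_scope.
Local Open Scope ring_scope.

Notation mu := (@lebesgue_measure _).

Lemma mu_itv_fin (R : realType) (x : R) :
  ((@lebesgue_measure R) (`]0%R, x[%classic : set R) < +oo)%E.
Proof. by rewrite lebesgue_measure_itv/=; case: ifP => _; rewrite ?ltry. Qed.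

Lemma muI (R : realType) (a x : R) : a < x ->
  ((@lebesgue_measure R) (`[a, x[%classic : set R) = (Num.max (x - a) 0)%:E)%E.
Proof.
move=> ax; rewrite lebesgue_measure_itv/= lte_fin ax -EFinD; congr EFin.
by apply/esym/max_idPl; lra.
Qed.

Lemma bint (R : realType) (x : R) (f : R -> R) (M : R) : 0 <= x ->
  measurable_fun `]0, x[ f -> (forall t, 0 < t < x -> `|f t| <= M) ->
  (@lebesgue_measure R).-integrable `]0, x[ (EFin \o f).
Proof.
move=> x0 mf hb; apply: measurable_bounded_integrable => //.
  exact: mu_itv_fin.
have H : \forall N \near +oo, forall t, (`]0, x[%classic : set R) t -> `|f t| <= N.
  near=> N => t /= Ht.
  have Ht' : 0 < t < x by move: Ht; rewrite /= in_itv.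
  apply: le_trans (hb t Ht') _.
  near: N; apply: nbhs_pinfty_ge; exact: num_real.
exact: H.
Unshelve. all: by end_near.
Qed.

Definition ind (R : realType) (a : R) : R -> R := \1_[set t | a <= t].

Lemma ind_nd (R : realType) (a : R) : {homo ind a : x y / x <= y}.
Proof.
move=> x y xy; rewrite /ind !indicE; case: (boolP (x \in _)) => hx.
  by rewrite mem_set //= (le_trans _ xy) //; move: hx; rewrite inE.
by case: (_ \in _).
Qed.

Lemma ind_mes (R : realType) (a : R) (D : set R) : measurable D -> measurable_fun D (ind a).
Proof. by move=> mD; apply: nondecreasing_measurable => //; exact: ind_nd. Qed.

Lemma ind_int (R : realType) (a x : R) : 0 < a -> 0 <= x ->
  Rintegral (@lebesgue_measure R) `]0, x[ (ind a) = Num.max (x - a) 0.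
Proof.
move=> a0 x0.
have mA : measurable [set t : R | a <= t].
  rewrite (_ : [set t : R | a <= t] = `[a, +oo[%classic); last first.
    by apply/seteqP; split => t /=; rewrite in_itv /= andbT.
  exact: measurable_itv.
rewrite /Rintegral /ind integral_indic //.
have [ax|xa] := ltP a x.
  have -> : [set t | a <= t] `&` `]0, x[ = `[a, x[%classic.
    apply/seteqP; split => t /=; rewrite !in_itv /= => H.
      by case: H => H1 /andP[H2 H3]; rewrite H1 H3.
    by case/andP: H => H1 H2; split => //; apply/andP; split => //; lra.
  by rewrite -[RHS]/(fine (Num.max (x - a) 0)%:E); congr fine; apply: muI.
have -> : [set t | a <= t] `&` `]0, x[ = set0.
  apply/seteqP; split => t //= []; rewrite in_itv /= => H1 /andP[H2 H3]; lra.
by rewrite measure0 /=; apply/esym/max_idPr; lra.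
Qed.

Lemma muO (R : realType) (x : R) : 0 <= x ->
  ((@lebesgue_measure R) (`]0%R, x[%classic : set R) = x%:E)%E.
Proof.
move=> x0; rewrite lebesgue_measure_itv/=; case: ifP => h.
  by rewrite -EFinD subr0.
move/negbT: h; rewrite lte_fin -leNgt => h.
by have -> : x = 0 by apply/eqP; rewrite eq_le h x0.
Qed.

Lemma Rint_cst (R : realType) (x r : R) : 0 <= x ->
  Rintegral (@lebesgue_measure R) `]0, x[ (fun _ => r) = r * x.
Proof.
move=> x0; rewrite Rintegral_cst //; congr (_ * _).
by rewrite -[RHS]/(fine x%:E); congr fine; apply: muO.
Qed.

Lemma max0 (R : realType) (u : R) :
  (0 <= u /\ Num.max u 0 = u) \/ (u < 0 /\ Num.max u 0 = 0).
Proof.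
case: (leP 0 u) => h; [left; split => //; exact/max_idPl|].
by right; split => //; apply/max_idPr; exact: ltW.
Qed.

Definition ramp (R : realType) (a x : R) := Num.max (x - a) 0.
Definition fa (R : realType) (dl a x : R) := x / 2 - (1/2 - dl) * ramp a x.
Definition ga (R : realType) (dl a x : R) := 1/2 - (1/2 - dl) * ind a x.
Definition P (R : realType) (tb : R -> R) (v : R) :=
  Rintegral (@lebesgue_measure R) `]0, 1[ (fun y => \1_[set y' | tb y' < v] y).

Lemma ramp_nd (R : realType) (a : R) : {homo ramp a : x y / x <= y}.
Proof.
move=> x y xy; rewrite /ramp.
case: (max0 (x - a)) => [[h1 ->]|[h1 ->]]; case: (max0 (y - a)) => [[h2 ->]|[h2 ->]]; lra.
Qed.

Lemma fa_nd (R : realType) (dl a : R) : 0 <= dl <= 1/2 -> {homo fa dl a : x y / x <= y}.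
Proof.
move=> /andP[d0 d1] x y xy; rewrite /fa /ramp.
case: (max0 (x - a)) => [[h1 ->]|[h1 ->]]; case: (max0 (y - a)) => [[h2 ->]|[h2 ->]];
  nra.
Qed.

Lemma ind01 (R : realType) (a x : R) : ind a x = 0 \/ ind a x = 1.
Proof. by rewrite /ind indicE; case: (_ \in _); [right|left]. Qed.

Lemma ga_mes (R : realType) (dl a : R) (D : set R) : measurable D -> measurable_fun D (ga dl a).
Proof.
move=> mD; apply: measurable_funB; first exact: measurable_cst.
by apply: measurable_funM; [exact: measurable_cst | exact: ind_mes].
Qed.

Lemma nd_mes (R : realType) (f : R -> R) (D : set R) : measurable D ->
  {homo f : x y / x <= y} -> measurable_fun D f.
Proof. by move=> mD h; apply: nondecreasing_measurable. Qed.

Lemma indv_mes (R : realType) (tb : R -> R) (v : R) (D : set R) : measurable D ->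
  {homo tb : x y / x <= y} -> measurable_fun D (fun y => \1_[set y' | tb y' < v] y : R).
Proof.
move=> mD h; apply: nonincreasing_measurable => // y1 y2 y12.
rewrite !indicE; case: (boolP (y2 \in _)) => h2.
  rewrite mem_set //= (le_lt_trans (h _ _ y12)) //; move: h2; rewrite inE //.
by case: (_ \in _).
Qed.

Lemma indv_int (R : realType) (tb : R -> R) (v : R) :
  {homo tb : x y / x <= y} ->
  (@lebesgue_measure R).-integrable `]0, 1[ (EFin \o (fun y => \1_[set y' | tb y' < v] y : R)).
Proof.
move=> h; apply: (bint (M:=1)) => //; first exact: indv_mes.
by move=> t _; rewrite indicE; case: (_ \in _); rewrite ?normr1 ?normr0.
Qed.

Lemma P_ge0 (R : realType) (tb : R -> R) (v : R) : 0 <= P tb v.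
Proof. by apply: Rintegral_ge0 => x _; rewrite indicE; case: (_ \in _). Qed.

Lemma P_le1 (R : realType) (tb : R -> R) (v : R) : {homo tb : x y / x <= y} -> P tb v <= 1.
Proof.
move=> h; rewrite /P.
apply: (@le_trans _ _ (Rintegral (@lebesgue_measure R) `]0, 1[ (fun _ => 1))).
  apply: le_Rintegral => //.
  - exact: indv_int.
  - by apply: (bint (M:=1)) => // t _; rewrite normr1.
by rewrite Rint_cst // mulr1.
Qed.

Lemma P_nd (R : realType) (tb : R -> R) : {homo tb : x y / x <= y} -> {homo P tb : x y / x <= y}.
Proof.
move=> h v w vw; apply: le_Rintegral => //; try exact: indv_int.
move=> y _; rewrite !indicE; case: (boolP (y \in _)) => hy.
  by rewrite mem_set //= (lt_le_trans _ vw) //; move: hy; rewrite inE.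
by case: (_ \in _).
Qed.

Lemma P_eq1 (R : realType) (tb : R -> R) (v : R) :
  (forall y, 0 < y < 1 -> tb y < v) -> P tb v = 1.
Proof.
move=> h; rewrite /P (@eq_Rintegral _ _ _ _ _ (fun _ => 1)).
  by rewrite Rint_cst // mulr1.
move=> y; rewrite inE /= in_itv /= => hy.
by rewrite indicE mem_set //=; apply: h.
Qed.

Lemma cst_int (R : realType) (x r : R) : 0 <= x ->
  (@lebesgue_measure R).-integrable `]0, x[ (EFin \o (fun _ => r)).
Proof. by move=> x0; apply: (bint (M:=`|r|)) => //; exact: measurable_cst. Qed.

Lemma ind_intg (R : realType) (x a : R) : 0 <= x ->
  (@lebesgue_measure R).-integrable `]0, x[ (EFin \o ind a).
Proof.
move=> x0; apply: (bint (M:=1)) => //; first exact: ind_mes.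
by move=> t _; case: (ind01 a t) => ->; rewrite ?normr0 ?normr1.
Qed.

Lemma fa_int (R : realType) (dl a x : R) : 0 < a -> 0 <= dl <= 1/2 -> 0 <= x <= 1 ->
  fa dl a x = fa dl a 0 + Rintegral (@lebesgue_measure R) `]0, x[ (ga dl a).
Proof.
move=> a0 /andP[d0 d1] /andP[x0 x1].
have -> : fa dl a 0 = 0.
  rewrite /fa /ramp; case: (max0 (0 - a)) => [[h ->]|[h ->]]; lra.
rewrite /ga RintegralB //; last first.
- apply: (bint (M:=`|1/2 - dl|)) => //.
    by apply: measurable_funM; [exact: measurable_cst | exact: ind_mes].
  by move=> t _; rewrite normrM; case: (ind01 a t) => ->; rewrite ?normr0 ?normr1 ?mulr0 ?mulr1.
- exact: cst_int.
rewrite [X in _ - X]RintegralZl //; last exact: ind_intg.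
rewrite Rint_cst // ind_int // /fa /ramp; lra.
Qed.

Lemma fa_wd (R : realType) (dl a : R) : 0 < a -> 0 <= dl <= 1/2 ->
  weak_deriv01 (fa dl a) (ga dl a).
Proof.
move=> a0 /andP[d0 d1]; split.
  apply: (bint (M:=1)) => //; first exact: ga_mes.
  move=> t _; rewrite /ga ler_norml; case: (ind01 a t) => ->; lra.
by move=> x hx; apply: fa_int => //; apply/andP.
Qed.

Lemma fa0 (R : realType) (dl a : R) : 0 < a -> fa dl a 0 = 0.
Proof. move=> a0; rewrite /fa /ramp; case: (max0 (0 - a)) => [[h ->]|[h ->]]; lra. Qed.

Lemma fa_rng (R : realType) (dl a x : R) : 0 < a -> 0 <= dl <= 1/2 -> 0 <= x <= 1 ->
  0 <= fa dl a x <= x / 2.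
Proof.
move=> a0 /andP[d0 d1] /andP[x0 x1]; rewrite /fa /ramp.
case: (max0 (x - a)) => [[h ->]|[h ->]]; apply/andP; split; nra.
Qed.

Lemma fa_B (R : realType) (dl a : R) : 0 < dl <= 1/2 -> 0 < a -> Bdelta dl (fa dl a).
Proof.
move=> /andP[d0 d1] a0; exists (ga dl a); split.
  by apply: fa_wd => //; rewrite d1 ltW.
split.
  apply: aeW => x; rewrite in_itv /= => /andP[x0 x1].
  have := @fa_rng R dl a x a0; rewrite d1 ltW // ltW // ltW // => /(_ isT isT) /andP[h1 h2].
  by rewrite h1 /=; lra.
split; last exact: fa0.
apply: aeW => x _; rewrite /ga; case: (ind01 a x) => ->; lra.
Qed.

Lemma ramp_rng (R : realType) (a x : R) : 0 < a -> a <= 1 -> x <= 1 -> 0 <= ramp a x <= 1 - a.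
Proof.
move=> a0 a1 x1; rewrite /ramp; case: (max0 (x - a)) => [[h ->]|[h ->]]; apply/andP; split; lra.
Qed.

Lemma cramp_int (R : realType) (c a : R) : 0 < a < 1 -> 0 <= c <= 1 ->
  (@lebesgue_measure R).-integrable `]0, 1[ (EFin \o (fun x => c * ramp a x)).
Proof.
move=> /andP[a0 a1] /andP[c0 c1]; apply: (bint (M:=1)) => //.
  by apply: measurable_funM; [exact: measurable_cst | apply: nd_mes => //; exact: ramp_nd].
move=> t /andP[t0 t1]; have /andP[r0 r1] := ramp_rng (x:=t) a0 (ltW a1) (ltW t1).
rewrite ger0_norm; [nra | exact: mulr_ge0].
Qed.

Lemma bs_int (R : realType) (x : R) : 0 <= x ->
  betastar x = betastar 0 + Rintegral (@lebesgue_measure R) `]0, x[ (fun _ => 1/2).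
Proof. by move=> x0; rewrite Rint_cst // /betastar; lra. Qed.

Lemma fa_Vb (R : realType) (dl a eps : R) : 0 < dl <= 1/2 -> 0 < a < 1 -> 1 - a < eps ->
  Rintegral (@lebesgue_measure R) `]0, 1[ (fun x => `|fa dl a x - betastar x|) +
  Rintegral (@lebesgue_measure R) `]0, 1[ (fun x => `|ga dl a x - 1/2|) < eps.
Proof.
move=> /andP[d0 d1] /andP[a0 a1] ae.
have E1 : Rintegral (@lebesgue_measure R) `]0, 1[ (fun x => `|fa dl a x - betastar x|) =
    Rintegral (@lebesgue_measure R) `]0, 1[ (fun x => (1/2 - dl) * ramp a x).
  apply: eq_Rintegral => x _; rewrite /fa /betastar.
  have -> : x / 2 - (1 / 2 - dl) * ramp a x - x / 2 = - ((1 / 2 - dl) * ramp a x) by lra.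
  rewrite normrN ger0_norm //; apply: mulr_ge0; first lra.
  by rewrite /ramp le_max lexx orbT.
have E2 : Rintegral (@lebesgue_measure R) `]0, 1[ (fun x => `|ga dl a x - 1/2|) =
    Rintegral (@lebesgue_measure R) `]0, 1[ (fun x => (1/2 - dl) * ind a x).
  apply: eq_Rintegral => x _; rewrite /ga.
  have -> : 1/2 - (1 / 2 - dl) * ind a x - 1/2 = - ((1 / 2 - dl) * ind a x) by lra.
  rewrite normrN ger0_norm //; apply: mulr_ge0; first lra.
  by case: (ind01 a x) => ->.
rewrite E1 E2 [X in _ + X]RintegralZl //; last exact: ind_intg.
rewrite ind_int //.
have : Rintegral (@lebesgue_measure R) `]0, 1[ (fun x => (1/2 - dl) * ramp a x) <=
    Rintegral (@lebesgue_measure R) `]0, 1[ (fun x => (1/2 - dl) * (1 - a)).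
  apply: le_Rintegral => //.
  - apply: cramp_int; rewrite ?a0 ?a1 //; lra.
  - exact: cst_int.
  - move=> x /andP[_ x1] /=. 
    have /andP[r0 r1] := ramp_rng (x:=x) a0 (ltW a1) (ltW x1).
    nra.
rewrite Rint_cst // mulr1.
have -> : Num.max (1 - a) 0 = 1 - a by apply/max_idPl; lra.
nra.
Qed.

Lemma fa_V (R : realType) (dl a eps : R) : 0 < dl <= 1/2 -> 0 < a < 1 -> 1 - a < eps ->
  Vball (@betastar R) eps (fa dl a).
Proof.
move=> hd ha he; exists (ga dl a), (fun _ => 1/2); split.
  case/andP: hd => d0 d1; case/andP: ha => a0 _.
  by apply: fa_wd => //; rewrite d1 ltW.
split; last exact: fa_Vb.
split; first exact: cst_int.
by move=> x /andP[x0 _]; apply: bs_int.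
Qed.

Lemma ind1 (R : realType) (a x : R) : a <= x -> ind a x = 1.
Proof. by move=> h; rewrite /ind indicE mem_set. Qed.

Lemma ind0 (R : realType) (a x : R) : x < a -> ind a x = 0.
Proof. by move=> h; rewrite /ind indicE memNset //= => h'; lra. Qed.

Lemma tb_le (R : realType) (dl k y : R) : 0 < dl <= 1/5 -> 0 < k <= 1/2 -> 0 < y < 1 ->
  fa dl (1 - k) y <= 1/2 - (1/2 - dl) * k.
Proof.
move=> /andP[d0 d1] /andP[k0 k1] /andP[y0 y1]; rewrite /fa /ramp.
case: (max0 (y - (1 - k))) => [[h ->]|[h ->]]; nra.
Qed.

Lemma key (R : realType) (dl k x e : R) : 0 < dl <= 1/5 -> 0 < k <= 1/2 -> 1 - k/2 < x < 1 ->
  `|e| < 1/2 ->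
  1/2 - (1/2 - dl) * k < fa dl (1 - k/2) x + e * (fa dl (1 - k/2) x - betastar x).
Proof.
move=> /andP[d0 d1] /andP[k0 k1] /andP[x0 x1]; rewrite ltr_norml => /andP[e0 e1].
rewrite /fa /ramp /betastar.
have -> : Num.max (x - (1 - k / 2)) 0 = x - (1 - k/2) by apply/max_idPl; lra.
set t := x - (1 - k/2).
set c := 1/2 - dl.
have ht0 : 0 < t by rewrite /t; lra.
have ht1 : t < k/2 by rewrite /t; lra.
have hc : 3/10 <= c by rewrite /c; lra.
have hc1 : c < 1/2 by rewrite /c; lra.
have h1 : 0 <= (k - 2 * t) * k * (c - 1/4).
  apply: mulr_ge0; [apply: mulr_ge0; lra | lra].
have h2 : 0 < t * c * k * (1 - e).
  apply: mulr_gt0; [apply: mulr_gt0; [apply: mulr_gt0 |] |]; lra.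
have -> : x = t + (1 - k/2) by rewrite /t; lra.
nra.
Qed.

Lemma pt (R : realType) (dl k x e : R) : 0 < dl <= 1/5 -> 0 < k <= 1/2 -> 0 < x < 1 ->
  `|e| < 1/2 ->
  let b := fa dl (1 - k/2) in let tb := fa dl (1 - k) in
  (x - (b x + e * (b x - betastar x))) * P tb (b x + e * (b x - betastar x)) =
  (x - b x) * P tb (b x) + e * ((1/2 - dl) * ramp (1 - k/2) x).
Proof.
move=> hd hk /andP[x0 x1] he b tb.
have hd' := hd; have hk' := hk.
case/andP: hd' => d0 d1; case/andP: hk' => k0 k1.
have dE : b x - betastar x = - ((1/2 - dl) * ramp (1 - k/2) x).
  by rewrite /b /fa /betastar; lra.
case: (leP x (1 - k/2)) => hx.
  rewrite dE; have -> : ramp (1 - k/2) x = 0 by apply/max_idPr; lra.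
  by rewrite !(mulr0, oppr0, addr0).
have P1 : forall e', `|e'| < 1/2 -> P tb (b x + e' * (b x - betastar x)) = 1.
  move=> e' he'; apply: P_eq1 => y hy.
  apply: le_lt_trans (tb_le hd hk hy) _.
  by apply: key => //; rewrite hx x1.
rewrite P1 //.
have := P1 0; rewrite normr0 mul0r addr0 => ->; last lra.
rewrite dE; lra.
Qed.

Lemma F0_int (R : realType) (dl k : R) : 0 < dl <= 1/5 -> 0 < k <= 1/2 ->
  (@lebesgue_measure R).-integrable `]0, 1[
    (EFin \o (fun x => (x - fa dl (1 - k/2) x) * P (fa dl (1 - k)) (fa dl (1 - k/2) x))).
Proof.
move=> /andP[d0 d1] /andP[k0 k1].
have hd : 0 <= dl <= 1/2 by apply/andP; split; lra.
apply: (bint (M:=1)) => //.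
  apply: measurable_funM.
    by apply: measurable_funB; [exact: measurable_id | apply: nd_mes => //; exact: fa_nd].
  apply: (measurableT_comp (f := P (fa dl (1 - k)))).
    by apply: nd_mes => //; apply: P_nd; exact: fa_nd.
  by apply: nd_mes => //; exact: fa_nd.
move=> t /andP[t0 t1].
have /andP[f0 f1] := fa_rng (dl:=dl) (a:=1 - k/2) (x:=t) ltac:(lra) hd ltac:(apply/andP; split; lra).
have p0 := P_ge0 (fa dl (1 - k)) (fa dl (1 - k / 2) t).
have p1 := P_le1 (fa dl (1 - k/2) t) (@fa_nd R dl (1 - k) hd).
rewrite normrM !ger0_norm //; last lra.
nra.
Qed.

Lemma Ueq_aux (R : realType) (dl k e : R) : 0 < dl <= 1/5 -> 0 < k <= 1/2 -> `|e| < 1/2 ->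
  Rintegral (@lebesgue_measure R) `]0, 1[ (fun x =>
    (x - (fa dl (1 - k/2) x + e * (fa dl (1 - k/2) x - betastar x))) *
    P (fa dl (1 - k)) (fa dl (1 - k/2) x + e * (fa dl (1 - k/2) x - betastar x))) =
  Rintegral (@lebesgue_measure R) `]0, 1[ (fun x =>
    (x - fa dl (1 - k/2) x) * P (fa dl (1 - k)) (fa dl (1 - k/2) x)) +
  e * Rintegral (@lebesgue_measure R) `]0, 1[ (fun x => (1/2 - dl) * ramp (1 - k/2) x).
Proof.
move=> hd hk he.
have hd' := hd; have hk' := hk.
case/andP: hd' => d0 d1; case/andP: hk' => k0 k1.
have E : Rintegral (@lebesgue_measure R) `]0, 1[ (fun x =>
    (x - (fa dl (1 - k/2) x + e * (fa dl (1 - k/2) x - betastar x))) *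
    P (fa dl (1 - k)) (fa dl (1 - k/2) x + e * (fa dl (1 - k/2) x - betastar x))) =
  Rintegral (@lebesgue_measure R) `]0, 1[ (fun x =>
    (x - fa dl (1 - k/2) x) * P (fa dl (1 - k)) (fa dl (1 - k/2) x) +
    e * ((1/2 - dl) * ramp (1 - k/2) x)).
  apply: eq_Rintegral => x; rewrite inE /= in_itv /= => hx.
  exact: pt.
rewrite E RintegralD //; first last.
- apply: (bint (M:=1)) => //.
    apply: measurable_funM; first exact: measurable_cst.
    apply: measurable_funM; first exact: measurable_cst.
    by apply: nd_mes => //; exact: ramp_nd.
  move=> t /andP[t0 t1].
  have /andP[r0 r1] := ramp_rng (x:=t) (a:=1 - k/2) ltac:(lra) ltac:(lra) (ltW t1).
  have hc : 0 <= 1/2 - dl by lra.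
  rewrite normrM normrM (ger0_norm r0) (ger0_norm hc).
  rewrite ltr_norml in he; case/andP: he => e0 e1.
  have : `|e| <= 1/2 by rewrite ler_norml; apply/andP; split; lra.
  move=> he'.
  have : 0 <= (1/2 - dl) * ramp (1 - k / 2) t <= 1 by apply/andP; split; nra.
  case/andP => q0 q1.
  have := normr_ge0 e. nra.
- exact: F0_int.
congr (_ + _).
apply: RintegralZl => //.
apply: cramp_int; apply/andP; split; lra.
Qed.

Lemma L_pos (R : realType) (dl k : R) : 0 < dl <= 1/5 -> 0 < k <= 1/2 ->
  0 < Rintegral (@lebesgue_measure R) `]0, 1[ (fun x => (1/2 - dl) * ramp (1 - k/2) x).
Proof.
move=> /andP[d0 d1] /andP[k0 k1].
have H : Rintegral (@lebesgue_measure R) `]0, 1[ (fun x => ((1/2 - dl) * (k/4)) * ind (1 - k/4) x)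
   <= Rintegral (@lebesgue_measure R) `]0, 1[ (fun x => (1/2 - dl) * ramp (1 - k/2) x).
  apply: le_Rintegral => //.
  - apply: (bint (M:=1)) => //.
      by apply: measurable_funM; [exact: measurable_cst | exact: ind_mes].
    move=> t _; rewrite normrM; case: (ind01 (1 - k/4) t) => ->;
      rewrite ?normr0 ?normr1 ?mulr0 ?mulr1 //.
    rewrite ger0_norm; nra.
  - apply: cramp_int; apply/andP; split; lra.
  - move=> x /andP[x0 x1].
    case: (leP (1 - k/4) x) => hx.
      rewrite ind1 // mulr1; apply: ler_wpM2l; first lra.
      by rewrite /ramp le_max; apply/orP; left; lra.
    rewrite ind0 // mulr0; apply: mulr_ge0; first lra.
    by rewrite /ramp le_max lexx orbT.
move: H; rewrite RintegralZl //; last exact: ind_intg.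
rewrite ind_int //; last lra.
have -> : 1 - (1 - k / 4) = k/4 by lra.
have -> : Num.max (k / 4) 0 = k/4 by apply/max_idPl; lra.
move=> H; apply: lt_le_trans H.
apply: mulr_gt0; [apply: mulr_gt0|]; lra.
Qed.

Lemma DU_main (R : realType) (dl k : R) : 0 < dl <= 1/5 -> 0 < k <= 1/2 ->
  DU_pos (fa dl (1 - k/2)) (fa dl (1 - k)) (fun x => fa dl (1 - k/2) x - @betastar R x).
Proof.
move=> hd hk.
exists (Rintegral (@lebesgue_measure R) `]0, 1[ (fun x => (1/2 - dl) * ramp (1 - k/2) x)).
split; first exact: L_pos.
apply: cvg_near_cst.
near=> e.
have e0 : e != 0 by near: e; exact: nbhs_dnbhs_neq.
have e1 : `|e| < 1/2 by near: e; apply: dnbhs0_lt; lra.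
rewrite /U.
rewrite (Ueq_aux hd hk e1).
rewrite addrC addKr mulrC mulKf //.
Unshelve. all: by end_near.
Qed.

Theorem lemma4 (R : realType) (delta : R) (hd0 : 0 < delta) (hd1 : delta <= 1 / 5) :
  (exists b tb : R -> R, Bdelta delta b /\ Bdelta delta tb /\
     DU_pos b tb (fun x => b x - @betastar R x)) /\
  (forall eps : R, 0 < eps ->
     exists b tb : R -> R,
       Bdelta delta b /\ Bdelta delta tb /\
       Vball (@betastar R) eps b /\ Vball (@betastar R) eps tb /\
       DU_pos b tb (fun x => b x - @betastar R x)).
Proof.
have hd : 0 < delta <= 1/5 by rewrite hd0 hd1.
have hd' : 0 < delta <= 1/2 by rewrite hd0 /=; lra.
have P2 : forall eps : R, 0 < eps ->
     exists b tb : R -> R,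
       Bdelta delta b /\ Bdelta delta tb /\
       Vball (@betastar R) eps b /\ Vball (@betastar R) eps tb /\
       DU_pos b tb (fun x => b x - @betastar R x).
  move=> eps he.
  pose k := Num.min (1/2) (eps / 2).
  have k1 : k <= 1/2 by rewrite /k ge_min lexx.
  have k2 : k <= eps / 2 by rewrite /k ge_min lexx orbT.
  have k0 : 0 < k by rewrite /k lt_min; apply/andP; split; lra.
  have hk : 0 < k <= 1/2 by rewrite k0 k1.
  exists (fa delta (1 - k/2)), (fa delta (1 - k)).
  split; first by apply: fa_B => //; lra.
  split; first by apply: fa_B => //; lra.
  split; first by apply: fa_V => //; [apply/andP; split; lra | lra].
  split; first by apply: fa_V => //; [apply/andP; split; lra | lra].
  exact: DU_main.
split => //.
have [b [tb [? [? [_ [_ ?]]]]]] := P2 1 ltr01.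
by exists b, tb.
Qed.
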